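(* Fix $\gamma>0$ and let $S_\gamma=((\mathbf{x}_i,c_i(\gamma)))_{i\in I_\gamma}$ where $I_\gamma=\{i\in\{1,\dots,k\}:c_i(0)\ne c_i(\gamma)\}$, and assume $I_\gamma\neq\emptyset$. For $\gamma'\in\{0,\gamma\}$ let $\hat\beta(\gamma')\in\Theta$ be a maximizer of $\beta\mapsto L(D_{\gamma'};\beta)$, where $D_{\gamma'}=((\mathbf{x}_i,c_i(\gamma')))_{i=1}^k$. Then $$\mu(S_\gamma;\hat\beta(\gamma))\ge\mu(S_\gamma;\hat\beta(0)).$$
   Context: Let $k\ge1$, $\varepsilon\in(0,1)$, $\delta\ge0$, examples $\mathbf{z}_i=(\mathbf{x}_i,y_i)$, $i=1,\dots,k$, with $\mathbf{x}_i\in\mathbb{R}^m$, base conformity values $A(\mathbf{z}_i)\in\mathbb{R}$, and numbers $p_i\in[0,1]$. The update function is $U^*(\mathbf{z}_i;A,\delta)=+1$ if $p_i<(1-\varepsilon)-\delta$, $-1$ if $p_i>(1-\varepsilon)+\delta$, $0$ otherwise; $A^*_\gamma(\mathbf{z}_i)=A(\mathbf{z}_i)+\gamma U^*(\mathbf{z}_i;A,\delta)$. Define $q(\gamma)$: among indices $i$ with $\sum_{j=1}^k\mathbb{I}[A^*_\gamma(\mathbf{z}_i)\ge A^*_\gamma(\mathbf{z}_j)]+1\ge\varepsilon(k+1)$, take those minimizing $A^*_\gamma(\mathbf{z}_i)$ and let $q(\gamma)$ be the smallest such index; $t(\gamma)=A^*_\gamma(\mathbf{z}_{q(\gamma)})$,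 and $c_i(\gamma)=\mathbb{I}[A^*_\gamma(\mathbf{z}_i)\ge t(\gamma)]$. Fix a parametric family of conditional distributions of a binary outcome $C\in\{0,1\}$ given $\mathbf{x}$, indexed by $\beta\in\Theta$, with $0<\mathbb{P}(C=1\mid\mathbf{x};\beta)<1$ and $\mathbb{P}(C=0\mid\mathbf{x};\beta)=1-\mathbb{P}(C=1\mid\mathbf{x};\beta)$ (e.g. logistic regression). For a finite data set $E$ of pairs $(\mathbf{x},c)$, $L(E;\beta)=\sum_{(\mathbf{x},c)\in E}\log\mathbb{P}(C=c\mid\mathbf{x};\beta)$ is the binomial log-likelihood and, for non-empty $E$, $\mu(E;\beta)=\frac{1}{|E|}\sum_{(\mathbf{x},c)\in E}\log\frac{\mathbb{P}(C=c\mid\mathbf{x};\beta)}{1-\mathbb{P}(C=c\mid\mathbf{x};\beta)}$ is the sample mean of conditional log-odds. *)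

(* Defs.v *)
From HB Require Import structures.
From mathcomp Require Import all_boot all_order all_algebra.
From mathcomp Require Import reals exp.
Set Implicit Arguments. Unset Strict Implicit. Unset Printing Implicit Defensive.
Import Order.TTheory GRing.Theory Num.Theory.
Local Open Scope ring_scope.

Section Defs.
Variable R : realType.
Variable k : nat.

Definition Ustar (eps delta : R) (p : 'I_k -> R) (i : 'I_k) : R :=
  if p i < (1 - eps) - delta then 1
  else if p i > (1 - eps) + delta then -1
  else 0.

Definition Astar (eps delta gamma : R) (A p : 'I_k -> R) (i : 'I_k) : R :=
  A i + gamma * Ustar eps delta p i.

Definition admissible (eps : R) (As : 'I_k -> R) (i : 'I_k) : bool :=
  eps * (k.+1)%:R <= (\sum_(j < k) ((As j <= As i)%R : bool)%:R) + 1.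

Definition minimizer (eps : R) (As : 'I_k -> R) (i : 'I_k) : bool :=
  admissible eps As i && [forall j, admissible eps As j ==> (As i <= As j)].

(* q(gamma): the smallest such index (None only if no admissible index exists,
   which cannot happen for eps < 1) *)
Definition qidx (eps : R) (As : 'I_k -> R) : option 'I_k :=
  [pick i | minimizer eps As i && [forall j, minimizer eps As j ==> (i <= j)%N]].

Definition thr (eps : R) (As : 'I_k -> R) : R :=
  if qidx eps As is Some i then As i else 0.

Definition cgam (eps delta gamma : R) (A p : 'I_k -> R) (i : 'I_k) : bool :=
  let As := Astar eps delta gamma A p in As i >= thr eps As.

Definition probC (Theta X : Type) (P1 : Theta -> X -> R) (beta : Theta) (x : X)
  (c : bool) : R := if c then P1 beta x else 1 - P1 beta x.

Definition loglik (Theta X : Type) (P1 : Theta -> X -> R) (x : 'I_k -> X)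
  (c : 'I_k -> bool) (beta : Theta) : R :=
  \sum_(i < k) ln (probC P1 beta (x i) (c i)).

Definition meanlogodds (Theta X : Type) (P1 : Theta -> X -> R) (I : {set 'I_k})
  (x : 'I_k -> X) (c : 'I_k -> bool) (beta : Theta) : R :=
  (#|I|%:R)^-1 * \sum_(i in I)
     ln (probC P1 beta (x i) (c i) / (1 - probC P1 beta (x i) (c i))).

End Defs.

(* Main.v *)
Require Import Defs.
From HB Require Import structures.
From mathcomp Require Import all_boot all_order all_algebra.
From mathcomp Require Import reals exp.
From mathcomp Require Import lra.
Import Order.TTheory GRing.Theory Num.Theory.
Local Open Scope ring_scope.

Lemma key_decomp (R : realType) (k : nat) (Theta X : Type) (P1 : Theta -> X -> R)
  (x : 'I_k -> X) (c0 cg : 'I_k -> bool) (beta : Theta) :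
  (forall beta xx, 0 < P1 beta xx < 1) ->
  loglik P1 x cg beta = loglik P1 x c0 beta +
    \sum_(i in [set i | c0 i != cg i])
     ln (probC P1 beta (x i) (cg i) / (1 - probC P1 beta (x i) (cg i))).
Proof.
move=> HP.
rewrite /loglik (bigID (fun i => i \in [set i | c0 i != cg i]) _ (fun i => ln (probC P1 beta (x i) (cg i)))) /=.
rewrite (bigID (fun i => i \in [set i | c0 i != cg i]) _ (fun i => ln (probC P1 beta (x i) (c0 i)))) /=.
have E1 : \sum_(i < k | i \notin [set i | c0 i != cg i]) ln (probC P1 beta (x i) (cg i))
  = \sum_(i < k | i \notin [set i | c0 i != cg i]) ln (probC P1 beta (x i) (c0 i)).
  apply: eq_bigr => i; rewrite inE negbK => /eqP -> //.
rewrite E1.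
have E2 : \sum_(i < k | i \in [set i | c0 i != cg i]) ln (probC P1 beta (x i) (cg i))
  = \sum_(i < k | i \in [set i | c0 i != cg i]) ln (probC P1 beta (x i) (c0 i)) +
    \sum_(i in [set i | c0 i != cg i])
     ln (probC P1 beta (x i) (cg i) / (1 - probC P1 beta (x i) (cg i))).
  rewrite -big_split /=; apply: eq_bigr => i; rewrite inE => Hi.
  have /andP [h0 h1] := HP beta (x i).
  have Hc : c0 i = ~~ cg i by move: Hi; case: (c0 i); case: (cg i).
  have pos1 : 0 < P1 beta (x i) by [].
  have pos2 : 0 < 1 - P1 beta (x i) by rewrite subr_gt0.
  rewrite Hc /probC; case: (cg i) => /=.
  - rewrite ln_div ?posrE //; lra.
  - rewrite subKr ln_div ?posrE //; lra.
rewrite E2; lra.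
Qed.

Lemma aux (R : realType) (ag a0 bg b0 ug u0 : R) :
  bg = ag + ug -> b0 = a0 + u0 -> ag <= a0 -> b0 <= bg -> u0 <= ug.
Proof. move=> -> ->; lra. Qed.

Theorem theorem2 (R : realType) (k m : nat) (eps delta gamma : R)
  (x : 'I_k -> 'rV[R]_m) (A p : 'I_k -> R)
  (Theta : Type) (P1 : Theta -> 'rV[R]_m -> R)
  (betahat0 betahatg : Theta) :
  (0 < k)%N -> 0 < eps < 1 -> 0 <= delta ->
  (forall i, 0 <= p i <= 1) ->
  (forall beta xx, 0 < P1 beta xx < 1) ->
  0 < gamma ->
  let c0 := cgam eps delta 0 A p in
  let cg := cgam eps delta gamma A p in
  let Ig := [set i | c0 i != cg i] in
  Ig != set0 ->
  (forall beta, loglik P1 x c0 beta <= loglik P1 x c0 betahat0) ->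
  (forall beta, loglik P1 x cg beta <= loglik P1 x cg betahatg) ->
  meanlogodds P1 Ig x cg betahatg >= meanlogodds P1 Ig x cg betahat0.
Proof.
move=> _ _ _ _ HP _ c0 cg Ig _ H0 Hg.
rewrite /meanlogodds; apply: ler_wpM2l; first by rewrite invr_ge0.
have Dg := @key_decomp _ _ _ _ P1 x c0 cg betahatg HP.
have D0 := @key_decomp _ _ _ _ P1 x c0 cg betahat0 HP.
rewrite /Ig.
apply: (@aux R (loglik P1 x c0 betahatg) (loglik P1 x c0 betahat0) (loglik P1 x cg betahatg) (loglik P1 x cg betahat0)).
- exact: Dg.
- exact: D0.
- exact: H0.
- exact: Hg.
Qed.
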